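(* Let $G$ be a pro-group and $\varphi\colon G\to G$ an automorphism in $\operatorname{Pro}(\mathbf{Grp})$ with $\varphi^n=\mathrm{id}_G$ for some integer $n\ge1$. Then there exist a directed set $J$, an inverse system of groups $(G'_j)_{j\in J}$ and automorphisms $\varphi_j$ of $G'_j$ with $\varphi_j^n=\mathrm{id}$ commuting with the transition maps, and an isomorphism $G\cong G'$ in $\operatorname{Pro}(\mathbf{Grp})$ carrying $\varphi$ to the level automorphism $(\varphi_j)_j$.
   Context: For a category $\mathcal C$, $\operatorname{Pro}(\mathcal C)$ is its pro-completion: objects are inverse systems, i.e. functors $X\colon \mathcal I_X^{op}\to\mathcal C$ with $\mathcal I_X$ a small filtered category, and $\operatorname{Hom}_{\operatorname{Pro}(\mathcal C)}(X,Y)=\varprojlim_{j\in\mathcal I_Y}\varinjlim_{i\in\mathcal I_X}\mathcal C(X_i,Y_j)$. A pro-group is an object of $\operatorname{Pro}(\mathbf{Grp})$. *)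

(* Defs.v *)
From Stdlib Require Import ProofIrrelevance.

Set Implicit Arguments.
Unset Strict Implicit.

Record Grp := {
  gcar :> Type;
  gmul : gcar -> gcar -> gcar;
  gone : gcar;
  ginv : gcar -> gcar;
  gassoc : forall x y z, gmul x (gmul y z) = gmul (gmul x y) z;
  gmul1l : forall x, gmul gone x = x;
  gmul1r : forall x, gmul x gone = x;
  gmulVl : forall x, gmul (ginv x) x = gone;
  gmulVr : forall x, gmul x (ginv x) = gone }.

Record GHom (A B : Grp) := {
  hfun :> A -> B;
  hmul : forall x y, hfun (gmul x y) = gmul (hfun x) (hfun y) }.

Definition ghom_id (A : Grp) : GHom A A :=
  {| hfun := fun x => x; hmul := fun x y => eq_refl |}.

Definition ghom_comp (A B C : Grp) (g : GHom B C) (f : GHom A B) : GHom A C.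
Proof.
  refine {| hfun := fun x => g (f x) |}.
  intros x y; rewrite (hmul f), (hmul g); reflexivity.
Defined.

Fixpoint fiter {T : Type} (n : nat) (f : T -> T) (x : T) : T :=
  match n with O => x | S m => f (fiter m f x) end.

Record FiltCat := {
  ob :> Type;
  hom : ob -> ob -> Type;
  idm : forall a, hom a a;
  cmp : forall a b c, hom b c -> hom a b -> hom a c;
  cmp_idl : forall a b (f : hom a b), cmp (idm b) f = f;
  cmp_idr : forall a b (f : hom a b), cmp f (idm a) = f;
  cmp_assoc : forall a b c d (h : hom c d) (g : hom b c) (f : hom a b),
      cmp h (cmp g f) = cmp (cmp h g) f;
  filt_nonempty : inhabited ob;
  filt_cocone : forall a b, exists c (u : hom a c) (v : hom b c), True;
  filt_coeq : forall a b (u v : hom a b), exists c (w : hom b c), cmp w u = cmp w v }.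
Arguments cmp {f0 a b c} : rename.
Arguments idm {f0} : rename.

Record ProGrp := {
  pidx : FiltCat;
  pobj :> pidx -> Grp;
  pmap : forall i k : pidx, hom i k -> GHom (pobj k) (pobj i);
  pmap_id : forall i x, pmap (idm i) x = x;
  pmap_comp : forall (i k l : pidx) (u : hom i k) (v : hom k l) x,
      pmap (cmp v u) x = pmap u (pmap v x) }.
Arguments pmap {p i k}.

(* Equality in colim_{i in I_X} Grp(X_i, Y_j) of the germs (i,f) and (i',f'). *)
Definition germ_eq (X Y : ProGrp) (j : pidx Y) (i : pidx X) (f : GHom (X i) (Y j))
    (i' : pidx X) (f' : GHom (X i') (Y j)) : Prop :=
  exists (k : pidx X) (u : hom i k) (u' : hom i' k),
    forall x : X k, f (pmap u x) = f' (pmap u' x).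

(* A family of representatives j |-> (src j, f_j : X_{src j} -> Y_j); it is a
   morphism of Pro(Grp) (element of lim_j colim_i Grp(X_i,Y_j)) iff compatible. *)
Record PreHom (X Y : ProGrp) := {
  src : pidx Y -> pidx X;
  comp_at :> forall j : pidx Y, GHom (X (src j)) (Y j) }.

Definition is_prohom (X Y : ProGrp) (f : PreHom X Y) : Prop :=
  forall (j j' : pidx Y) (v : hom j j'),
    germ_eq (ghom_comp (pmap v) (f j')) (f j).

Definition pro_eq (X Y : ProGrp) (f g : PreHom X Y) : Prop :=
  forall j : pidx Y, germ_eq (f j) (g j).

Definition pro_id (X : ProGrp) : PreHom X X :=
  {| src := fun j => j; comp_at := fun j => ghom_id (X j) |}.

Definition pro_comp (X Y Z : ProGrp) (g : PreHom Y Z) (f : PreHom X Y) : PreHom X Z :=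
  {| src := fun k => src f (src g k);
     comp_at := fun k => ghom_comp (g k) (f (src g k)) |}.

Fixpoint pro_iter (X : ProGrp) (n : nat) (f : PreHom X X) : PreHom X X :=
  match n with O => pro_id X | S m => pro_comp f (pro_iter m f) end.

Definition pro_iso (X Y : ProGrp) (f : PreHom X Y) : Prop :=
  is_prohom f /\ exists g : PreHom Y X, is_prohom g /\
    pro_eq (pro_comp g f) (pro_id X) /\ pro_eq (pro_comp f g) (pro_id Y).

Record DirectedSet := {
  dcar :> Type;
  dle : dcar -> dcar -> Prop;
  dle_refl : forall a, dle a a;
  dle_trans : forall a b c, dle a b -> dle b c -> dle a c;
  d_nonempty : inhabited dcar;
  d_directed : forall a b, exists c, dle a c /\ dle b c }.

Definition dirCat (J : DirectedSet) : FiltCat.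
Proof.
  refine {| ob := dcar J; hom := @dle J; idm := @dle_refl J;
            cmp := fun a b c (g : @dle J b c) (f : @dle J a b) => dle_trans f g |}.
  - intros; apply proof_irrelevance.
  - intros; apply proof_irrelevance.
  - intros; apply proof_irrelevance.
  - exact (d_nonempty J).
  - intros a b; destruct (d_directed a b) as [c [h1 h2]]; exists c, h1, h2; exact I.
  - intros a b u v; exists b, (dle_refl b); apply proof_irrelevance.
Defined.

Record InvSys (J : DirectedSet) := {
  iobj :> J -> Grp;
  itrans : forall i k : J, @dle J i k -> GHom (iobj k) (iobj i);
  itrans_id : forall i (h : @dle J i i) x, itrans h x = x;
  itrans_comp : forall i k l (h1 : @dle J i k) (h2 : @dle J k l) (h3 : @dle J i l) x,
      itrans h3 x = itrans h1 (itrans h2 x) }.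
Arguments itrans {J i0 i k}.

Definition pro_of_sys (J : DirectedSet) (S : InvSys J) : ProGrp.
Proof.
  refine {| pidx := dirCat J; pobj := fun j : J => S j;
            pmap := fun i k (h : @dle J i k) => itrans h |}.
  - intros; apply itrans_id.
  - intros; apply itrans_comp.
Defined.

Definition level_hom (J : DirectedSet) (S : InvSys J) (phi : forall j : J, GHom (S j) (S j))
  : PreHom (pro_of_sys S) (pro_of_sys S) :=
  @Build_PreHom (pro_of_sys S) (pro_of_sys S) (fun j => j) phi.

(* Main.v *)
Require Import Defs.
From Stdlib Require Import ProofIrrelevance Classical ClassicalEpsilon FunctionalExtensionality List Lia PeanoNat Eqdep.
Import ListNotations.
Unset Implicit Arguments.

Lemma hom_one (A B : Grp) (f : GHom A B) : f (gone A) = gone B.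
Proof.
  assert (H : gmul (f (gone A)) (f (gone A)) = gmul (f (gone A)) (gone B)).
  { rewrite <- hmul, gmul1l, gmul1r. reflexivity. }
  assert (H2 := f_equal (gmul (ginv (f (gone A)))) H).
  rewrite !gassoc, gmulVl, !gmul1l in H2. exact H2.
Qed.

Lemma hom_inv (A B : Grp) (f : GHom A B) x : f (ginv x) = ginv (f x).
Proof.
  assert (H : gmul (f (ginv x)) (f x) = gmul (ginv (f x)) (f x)).
  { rewrite <- hmul, gmulVl, gmulVl. apply hom_one. }
  assert (H2 := f_equal (fun z => gmul z (ginv (f x))) H). simpl in H2.
  rewrite <- !gassoc, gmulVr, !gmul1r in H2. exact H2.
Qed.

Definition FunG (A : Grp) : Grp.
Proof.
  refine {| gcar := nat -> A; gmul := fun y z j => gmul (y j) (z j);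
            gone := fun _ => gone A; ginv := fun y j => ginv (y j) |};
  intros; apply functional_extensionality; intro; auto using gassoc, gmul1l, gmul1r, gmulVl, gmulVr.
Defined.

Inductive gen {H : Grp} (P : H -> Prop) : H -> Prop :=
| gen_b : forall y, P y -> gen P y
| gen_1 : gen P (gone H)
| gen_m : forall y z, gen P y -> gen P z -> gen P (gmul y z)
| gen_i : forall y, gen P y -> gen P (ginv y).

Definition SubGen (H : Grp) (P : H -> Prop) : Grp.
Proof.
  refine {| gcar := {y : H | gen P y};
            gmul := fun y z => exist _ (gmul (proj1_sig y) (proj1_sig z)) (gen_m P _ _ (proj2_sig y) (proj2_sig z));
            gone := exist _ (gone H) (gen_1 P);
            ginv := fun y => exist _ (ginv (proj1_sig y)) (gen_i P _ (proj2_sig y)) |};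
  intros; apply eq_sig_hprop; try (intros; apply proof_irrelevance); simpl;
  auto using gassoc, gmul1l, gmul1r, gmulVl, gmulVr.
Defined.

Lemma sub_eq (H : Grp) (P : H -> Prop) (y z : SubGen H P) : proj1_sig y = proj1_sig z -> y = z.
Proof. intro E. apply eq_sig_hprop; auto. intros; apply proof_irrelevance. Qed.

Lemma map_gen (H K : Grp) (f : GHom H K) (P : H -> Prop) (P' : K -> Prop) :
  (forall y, P y -> gen P' (f y)) -> forall y, gen P y -> gen P' (f y).
Proof.
  intros HP y Hy. induction Hy.
  - auto.
  - rewrite hom_one. apply gen_1.
  - rewrite hmul. apply gen_m; auto.
  - rewrite hom_inv. apply gen_i; auto.
Qed.

Definition SubMap (H K : Grp) (f : GHom H K) (P : H -> Prop) (P' : K -> Prop)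
  (HP : forall y, P y -> gen P' (f y)) : GHom (SubGen H P) (SubGen K P').
Proof.
  refine {| hfun := fun y : SubGen H P => (exist _ (f (proj1_sig y)) (map_gen H K f P P' HP _ (proj2_sig y)) : SubGen K P') |}.
  intros. apply sub_eq. simpl. apply hmul.
Defined.

Lemma gen_ind_eq (H K : Grp) (P : H -> Prop) (F1 F2 : GHom H K) :
  (forall y, P y -> F1 y = F2 y) -> forall y, gen P y -> F1 y = F2 y.
Proof.
  intros HP y Hy. induction Hy.
  - auto.
  - rewrite !hom_one. reflexivity.
  - rewrite !hmul. congruence.
  - rewrite !hom_inv. congruence.
Qed.

Definition FunMap (A B : Grp) (f : GHom A B) : GHom (FunG A) (FunG B).
Proof. refine {| hfun := fun (y : FunG A) => (fun j => f (y j)) : FunG B |}. intros. apply functional_extensionality. intro. simpl. apply hmul. Defined.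

Definition shiftk (A : Grp) (k : nat) : GHom (FunG A) (FunG A).
Proof. refine {| hfun := fun (y : FunG A) => (fun j => y (j + k)) : FunG A |}. reflexivity. Defined.

Definition evalH (A : Grp) (j : nat) : GHom (FunG A) A.
Proof. refine {| hfun := fun (y : FunG A) => y j |}. reflexivity. Defined.

Section DSec.
Variable G : ProGrp.
Notation I := (pidx G).

Definition Ent (v : I) := {a : I & (nat * hom a v)%type}.
Definition mkE {v} (a : I) (m : nat) (f : hom a v) : Ent v := existT _ a (m, f).
Definition mapE {v w : I} (c : hom v w) (e : Ent v) : Ent w :=
  existT _ (projT1 e) (fst (projT2 e), cmp c (snd (projT2 e))).

Lemma mkE_inj {v} a m m' (f f' : hom a v) : mkE a m f = mkE a m' f' -> m = m' /\ f = f'.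
Proof. intro H. apply inj_pair2 in H. inversion H. auto. Qed.

Lemma mkE_eq {v} a a' m m' (f : hom a v) (f' : hom a' v) : mkE a m f = mkE a' m' f' -> m = m'.
Proof. intro H. apply (f_equal (fun e : Ent v => fst (projT2 e))) in H. exact H. Qed.

Lemma in_mapE {v w} (c : hom v w) (L : list (Ent v)) a m (f : hom a w) :
  In (mkE a m f) (map (mapE c) L) -> exists f1, In (mkE a m f1) L /\ f = cmp c f1.
Proof.
  intro H. apply in_map_iff in H. destruct H as [[a1 [m1 f1]] [He Hin]].
  unfold mapE in He; simpl in He.
  assert (a1 = a) by exact (f_equal (@projT1 _ _) He). subst a1.
  apply mkE_inj in He. destruct He; subst. eauto.
Qed.

Lemma in_mapE2 {v w} (c : hom v w) (L : list (Ent v)) a m (f : hom a v) :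
  In (mkE a m f) L -> In (mkE a m (cmp c f)) (map (mapE c) L).
Proof. intro H. exact (in_map (mapE c) _ _ H). Qed.

Record Dob := { dv : I; dtag : nat; dL : list (Ent dv);
  dvert : In (mkE dv dtag (idm dv)) dL;
  dfun : forall a m (f g : hom a dv), In (mkE a m f) dL -> In (mkE a m g) dL -> f = g }.

Definition dleD (d d' : Dob) : Prop :=
  exists t : hom (dv d) (dv d'), In (mkE (dv d) (dtag d) t) (dL d') /\
    forall a m (f : hom a (dv d)), In (mkE a m f) (dL d) -> In (mkE a m (cmp t f)) (dL d').

Lemma dleD_refl d : dleD d d.
Proof. exists (idm (dv d)). split. apply dvert. intros. rewrite cmp_idl. auto. Qed.

Lemma dleD_trans a b c : dleD a b -> dleD b c -> dleD a c.
Proof.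
  intros [t1 [H1 H1']] [t2 [H2 H2']]. exists (cmp t2 t1). split.
  - apply H2'. auto.
  - intros. rewrite <- cmp_assoc. apply H2'. apply H1'. auto.
Qed.

Lemma coeq1 (a : I) (m : nat) (v2 : I) (L2 : list (Ent v2)) :
  forall k (g : hom a k) (u2 : hom v2 k), exists k' (c : hom k k'),
  forall f2, In (mkE a m f2) L2 -> cmp c g = cmp c (cmp u2 f2).
Proof.
  induction L2 as [|e L2 IH]; intros k g u2.
  - exists k, (idm k). intros f2 [].
  - destruct (IH k g u2) as [k1 [c1 Hc1]].
    destruct (classic (exists f, e = mkE a m f)) as [[f Hf]|Hn].
    + destruct (filt_coeq (cmp c1 g) (cmp c1 (cmp u2 f))) as [k2 [c2 Hc2]].
      exists k2, (cmp c2 c1). intros f2 [Hin|Hin].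
      * rewrite Hf in Hin. apply mkE_inj in Hin. destruct Hin as [_ Hin]. subst f2.
        rewrite <- !cmp_assoc. exact Hc2.
      * rewrite <- !cmp_assoc. f_equal. apply Hc1. auto.
    + exists k1, c1. intros f2 [Hin|Hin].
      * exfalso. apply Hn. eauto.
      * apply Hc1. auto.
Qed.

Lemma coeqL (v1 v2 : I) (L1 : list (Ent v1)) (L2 : list (Ent v2)) :
  forall k (u1 : hom v1 k) (u2 : hom v2 k), exists k' (c : hom k k'),
  forall a m f1 f2, In (mkE a m f1) L1 -> In (mkE a m f2) L2 ->
     cmp c (cmp u1 f1) = cmp c (cmp u2 f2).
Proof.
  induction L1 as [|e L1 IH]; intros k u1 u2.
  - exists k, (idm k). intros a m f1 f2 [].
  - destruct (IH k u1 u2) as [k1 [c1 Hc1]].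
    destruct e as [a0 [m0 f0]].
    destruct (coeq1 a0 m0 v2 L2 _ (cmp c1 (cmp u1 f0)) (cmp c1 u2)) as [k2 [c2 Hc2]].
    exists k2, (cmp c2 c1). intros a m f1 f2 [Hin|Hin] Hin2.
    + assert (a0 = a) by exact (f_equal (@projT1 _ _) Hin). subst a0.
      apply mkE_inj in Hin. destruct Hin; subst.
      rewrite <- !cmp_assoc. rewrite (Hc2 f2 Hin2). rewrite <- !cmp_assoc. reflexivity.
    + rewrite <- !cmp_assoc. f_equal. eapply Hc1; eauto.
Qed.

Lemma tagbound {v} (L : list (Ent v)) : exists N, forall a m f, In (mkE a m f) L -> m < N.
Proof.
  induction L as [|e L [N HN]].
  - exists 0. intros ? ? ? [].
  - exists (S (fst (projT2 e)) + N). intros a m f [H|H].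
    + subst e. simpl. lia.
    + specialize (HN _ _ _ H). lia.
Qed.

Lemma core (d1 d2 : Dob) k (u1 : hom (dv d1) k) (u2 : hom (dv d2) k) :
  exists (e : Dob) (c : hom k (dv e)),
    (exists t1, In (mkE (dv d1) (dtag d1) t1) (dL e) /\ t1 = cmp c u1) /\
    (exists t2, In (mkE (dv d2) (dtag d2) t2) (dL e) /\ t2 = cmp c u2) /\
    dleD d1 e /\ dleD d2 e.
Proof.
  destruct (coeqL _ _ (dL d1) (dL d2) _ u1 u2) as [k' [c Hc]].
  destruct (tagbound (dL d1)) as [N1 HN1]. destruct (tagbound (dL d2)) as [N2 HN2].
  set (w1 := cmp c u1). set (w2 := cmp c u2).
  set (L := mkE k' (N1 + N2) (idm k') :: map (mapE w1) (dL d1) ++ map (mapE w2) (dL d2)).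
  assert (Hv : In (mkE k' (N1 + N2) (idm k')) L) by (left; reflexivity).
  assert (Hinv : forall a m (f : hom a k'), In (mkE a m f) L ->
     (m = N1 + N2 /\ mkE a m f = mkE k' (N1+N2) (idm k')) \/
     (m < N1 + N2 /\ ((exists f1, In (mkE a m f1) (dL d1) /\ f = cmp w1 f1) \/
                      (exists f2, In (mkE a m f2) (dL d2) /\ f = cmp w2 f2)))).
  { intros a m f [H|H].
    - left. split; [symmetry; exact (mkE_eq _ _ _ _ _ _ H)| auto].
    - right. apply in_app_or in H. destruct H as [H|H].
      + apply in_mapE in H. destruct H as [f1 [H1 H2]]. specialize (HN1 _ _ _ H1). split; [lia|]. left; eauto.
      + apply in_mapE in H. destruct H as [f1 [H1 H2]]. specialize (HN2 _ _ _ H1). split; [lia|]. right; eauto. }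
  assert (Hfun : forall a m (f g : hom a k'), In (mkE a m f) L -> In (mkE a m g) L -> f = g).
  { intros a m f g Hf Hg. apply Hinv in Hf. apply Hinv in Hg.
    destruct Hf as [[Hm Hf]|[Hm Hf]]; destruct Hg as [[Hm' Hg]|[Hm' Hg]]; try lia.
    - rewrite <- Hg in Hf. apply mkE_inj in Hf. tauto.
    - destruct Hf as [[f1 [Hf1 ->]]|[f1 [Hf1 ->]]]; destruct Hg as [[g1 [Hg1 ->]]|[g1 [Hg1 ->]]].
      + rewrite (dfun d1 _ _ _ _ Hf1 Hg1). reflexivity.
      + unfold w1, w2. rewrite <- !cmp_assoc. eapply Hc; eauto.
      + unfold w1, w2. rewrite <- !cmp_assoc. symmetry. eapply Hc; eauto.
      + rewrite (dfun d2 _ _ _ _ Hf1 Hg1). reflexivity. }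
  set (e := {| dv := k'; dtag := N1 + N2; dL := L; dvert := Hv; dfun := Hfun |}).
  assert (H1 : In (mkE (dv d1) (dtag d1) w1) L).
  { right. apply in_or_app. left. pose proof (in_mapE2 w1 _ _ _ _ (dvert d1)) as H.
    rewrite cmp_idr in H. exact H. }
  assert (H2 : In (mkE (dv d2) (dtag d2) w2) L).
  { right. apply in_or_app. right. pose proof (in_mapE2 w2 _ _ _ _ (dvert d2)) as H.
    rewrite cmp_idr in H. exact H. }
  exists e, c. split; [exists w1; auto|]. split; [exists w2; auto|]. split.
  - exists w1. split; auto. intros. simpl. right. apply in_or_app. left. apply in_mapE2. auto.
  - exists w2. split; auto. intros. simpl. right. apply in_or_app. right. apply in_mapE2. auto.
Qed.


Definition tarr {d d' : Dob} (h : dleD d d') : hom (dv d) (dv d') :=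
  proj1_sig (constructive_indefinite_description _ h).

Lemma tarr_in {d d'} (h : dleD d d') : In (mkE (dv d) (dtag d) (tarr h)) (dL d').
Proof. exact (proj1 (proj2_sig (constructive_indefinite_description _ h))). Qed.

Lemma tarr_in2 {d d'} (h : dleD d d') a m f : In (mkE a m f) (dL d) -> In (mkE a m (cmp (tarr h) f)) (dL d').
Proof. exact (proj2 (proj2_sig (constructive_indefinite_description _ h)) a m f). Qed.

Lemma tarr_uniq {d d'} (h : dleD d d') t : In (mkE (dv d) (dtag d) t) (dL d') -> tarr h = t.
Proof. intro H. apply (dfun d' _ _ _ _ (tarr_in h) H). Qed.

Lemma tarr_refl {d} (h : dleD d d) : tarr h = idm (dv d).
Proof. apply tarr_uniq. apply dvert. Qed.

Lemma tarr_comp {a b c} (h1 : dleD a b) (h2 : dleD b c) (h3 : dleD a c) :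
  tarr h3 = cmp (tarr h2) (tarr h1).
Proof.
  apply tarr_uniq. apply tarr_in2. apply tarr_in.
Qed.

Definition tr {d d' : Dob} (h : dleD d d') : GHom (G (dv d')) (G (dv d)) := pmap (tarr h).

Lemma tr_refl {d} (h : dleD d d) x : tr h x = x.
Proof. unfold tr. rewrite tarr_refl. apply pmap_id. Qed.

Lemma tr_comp {a b c} (h1 : dleD a b) (h2 : dleD b c) (h3 : dleD a c) x :
  tr h3 x = tr h1 (tr h2 x).
Proof. unfold tr. rewrite (tarr_comp h1 h2 h3). apply pmap_comp. Qed.

Lemma tr_pi {d d'} (h h' : dleD d d') x : tr h x = tr h' x.
Proof. rewrite (proof_irrelevance _ h h'). reflexivity. Qed.

Lemma dirD (a b : Dob) : exists c, dleD a c /\ dleD b c.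
Proof.
  destruct (filt_cocone (dv a) (dv b)) as [k [u [v _]]].
  destruct (core a b k u v) as [e [c [_ [_ [H1 H2]]]]]. eauto.
Qed.

Definition base (i : I) : Dob.
Proof.
  refine {| dv := i; dtag := 0; dL := [mkE i 0 (idm i)] |}.
  - left; reflexivity.
  - intros a m f g [Hf|[]] [Hg|[]]. rewrite Hg in Hf. apply mkE_inj in Hf. destruct Hf; auto.
Defined.

Definition Dd : DirectedSet.
Proof.
  refine {| dcar := Dob; dle := dleD; dle_refl := dleD_refl; dle_trans := dleD_trans |}.
  - destruct (filt_nonempty I) as [i]. exact (inhabits (base i)).
  - exact dirD.
Defined.

Definition ev (P : Dob -> Prop) := exists e, forall d, dleD e d -> P d.

Lemma ev_le c : ev (fun d => dleD c d).
Proof. exists c. auto. Qed.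

Lemma ev_and P Q : ev P -> ev Q -> ev (fun d => P d /\ Q d).
Proof.
  intros [e1 H1] [e2 H2]. destruct (dirD e1 e2) as [e [Ha Hb]]. exists e. intros d Hd.
  split; [apply H1|apply H2]; eapply dleD_trans; eauto.
Qed.

Lemma ev_all_lt (P : nat -> Dob -> Prop) N : (forall k, k < N -> ev (P k)) ->
  ev (fun d => forall k, k < N -> P k d).
Proof.
  induction N; intro H.
  - destruct (filt_nonempty I) as [i]. exists (base i). intros. lia.
  - destruct (ev_and _ _ (IHN (fun k Hk => H k (Nat.lt_lt_succ_r _ _ Hk))) (H N (Nat.lt_succ_diag_r N))) as [e He].
    exists e. intros d Hd k Hk. destruct (He d Hd) as [Ha Hb].
    destruct (Nat.eq_dec k N); [subst; auto| apply Ha; lia].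
Qed.

Lemma ev_ex P c : ev P -> exists d, dleD c d /\ P d.
Proof. intros [e He]. destruct (dirD c e) as [d [H1 H2]]. exists d. auto. Qed.

Definition Dgerm (c1 c2 : Dob) {T : Type} (f : G (dv c1) -> T) (g : G (dv c2) -> T) : Prop :=
  ev (fun d => forall (h1 : dleD c1 d) (h2 : dleD c2 d) x, f (tr h1 x) = g (tr h2 x)).

Lemma Dgerm_wit c1 c2 T (f : G (dv c1) -> T) g : Dgerm c1 c2 f g ->
  exists d (h1 : dleD c1 d) (h2 : dleD c2 d), forall x, f (tr h1 x) = g (tr h2 x).
Proof.
  intros He. destruct (ev_ex _ c1 (ev_and _ _ He (ev_le c2))) as [d [h1 [H h2]]].
  exists d, h1, h2. apply H.
Qed.

Lemma Dgerm_refl c T (f : G (dv c) -> T) : Dgerm c c f f.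
Proof. exists c. intros d _ h1 h2 x. rewrite (tr_pi h1 h2). reflexivity. Qed.

Lemma Dgerm_sym c1 c2 T (f : G (dv c1) -> T) g : Dgerm c1 c2 f g -> Dgerm c2 c1 g f.
Proof. intros [e He]. exists e. intros. symmetry. auto. Qed.

Lemma Dgerm_trans c1 c2 c3 T (f : G (dv c1) -> T) g k :
  Dgerm c1 c2 f g -> Dgerm c2 c3 g k -> Dgerm c1 c3 f k.
Proof.
  intros H1 H2. destruct (ev_and _ _ (ev_and _ _ H1 H2) (ev_le c2)) as [e He].
  exists e. intros d Hd h1 h3 x. destruct (He d Hd) as [[Ha Hb] h2].
  rewrite (Ha h1 h2). apply Hb.
Qed.

Lemma Dgerm_post c1 c2 T U (F : T -> U) (f : G (dv c1) -> T) g :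
  Dgerm c1 c2 f g -> Dgerm c1 c2 (fun x => F (f x)) (fun x => F (g x)).
Proof. intros [e He]. exists e. intros. f_equal. auto. Qed.

Lemma Dgerm_ext c1 c2 T (f f' : G (dv c1) -> T) g g' :
  (forall x, f x = f' x) -> (forall x, g x = g' x) -> Dgerm c1 c2 f g -> Dgerm c1 c2 f' g'.
Proof. intros Hf Hg [e He]. exists e. intros. rewrite <- Hf, <- Hg. auto. Qed.

Lemma Dgerm_pre c c' (h : dleD c c') c2 T (f : G (dv c) -> T) (g : G (dv c2) -> T) :
  Dgerm c c2 f g -> Dgerm c' c2 (fun x => f (tr h x)) g.
Proof.
  intros [e He]. destruct (dirD e c') as [e' [H1 H2]]. exists e'. intros d Hd h1 h2 x.
  assert (Hc : dleD c d) by (eapply dleD_trans; eauto).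
  rewrite <- (tr_comp h h1 Hc). apply He. eapply dleD_trans; eauto.
Qed.

Lemma Dgerm_of_I c1 c2 T (f : G (dv c1) -> T) g :
  (exists k (u1 : hom (dv c1) k) (u2 : hom (dv c2) k), forall x, f (pmap u1 x) = g (pmap u2 x)) ->
  Dgerm c1 c2 f g.
Proof.
  intros [k [u1 [u2 Hu]]].
  destruct (core c1 c2 k u1 u2) as [e [c [[t1 [Ht1 E1]] [[t2 [Ht2 E2]] [H1 H2]]]]].
  exists e. intros d Hd h1 h2 x.
  rewrite (tr_comp H1 Hd h1), (tr_comp H2 Hd h2). unfold tr at 1 3.
  rewrite (tarr_uniq H1 t1 Ht1), (tarr_uniq H2 t2 Ht2), E1, E2, !pmap_comp. apply Hu.
Qed.

Lemma I_of_Dgerm c1 c2 T (f : G (dv c1) -> T) g : Dgerm c1 c2 f g ->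
  exists k (u1 : hom (dv c1) k) (u2 : hom (dv c2) k), forall x, f (pmap u1 x) = g (pmap u2 x).
Proof.
  intro H. destruct (Dgerm_wit _ _ _ _ _ H) as [d [h1 [h2 Hx]]].
  exists (dv d), (tarr h1), (tarr h2). exact Hx.
Qed.


Variable phi : PreHom G G.
Variable n : nat.
Hypothesis Hn : 1 <= n.
Hypothesis Hpro : is_prohom phi.
Hypothesis Hid : pro_eq (pro_iter n phi) (pro_id G).

Definition sN (m : nat) (i : I) : I := src (pro_iter m phi) i.
Definition Phi (m : nat) (i : I) : GHom (G (sN m i)) (G i) := comp_at (pro_iter m phi) i.

Lemma phi_prohom_D i i' (w : hom i i') :
  Dgerm (base (src phi i')) (base (src phi i)) (fun x => pmap w (phi i' x)) (fun x => phi i x).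
Proof.
  apply Dgerm_of_I. destruct (Hpro i i' w) as [k [u [u' H]]]. exists k, u, u'. exact H.
Qed.

Lemma precomp k (IH : forall i i' (w : hom i i'),
    Dgerm (base (sN k i')) (base (sN k i)) (fun x => pmap w (Phi k i' x)) (fun x => Phi k i x))
  c1 c2 T (f : G (dv c1) -> T) g :
  Dgerm c1 c2 f g ->
  Dgerm (base (sN k (dv c1))) (base (sN k (dv c2))) (fun x => f (Phi k (dv c1) x)) (fun x => g (Phi k (dv c2) x)).
Proof.
  intro H. destruct (Dgerm_wit _ _ _ _ _ H) as [d [h1 [h2 Hx]]].
  eapply Dgerm_trans.
  - apply Dgerm_sym. apply (Dgerm_post _ _ _ _ f). apply (IH _ _ (tarr h1)).
  - eapply Dgerm_trans.
    + eapply Dgerm_ext; [intro x; reflexivity | | apply Dgerm_refl].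
      intro x. simpl. apply Hx.
    + apply (Dgerm_post _ _ _ _ g). apply (IH _ _ (tarr h2)).
Qed.

Lemma iter_prohom k : forall i i' (w : hom i i'),
  Dgerm (base (sN k i')) (base (sN k i)) (fun x => pmap w (Phi k i' x)) (fun x => Phi k i x).
Proof.
  induction k; intros i i' w.
  - apply Dgerm_of_I. exists i', (idm i'), w. intro x. simpl. rewrite pmap_id. reflexivity.
  - exact (precomp k IHk (base (src phi i')) (base (src phi i)) _ _ _ (phi_prohom_D i i' w)).
Qed.

Lemma comp_lemma j : forall m i i' (w : hom (sN j i) i'),
  Dgerm (base (sN m i')) (base (sN (j + m) i)) (fun x => Phi j i (pmap w (Phi m i' x))) (Phi (j + m) i).
Proof.
  induction j; intros m i i' w.
  - apply (iter_prohom m i i' w).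
  - exact (Dgerm_post _ _ _ _ (phi i) _ _ (IHj m (src phi i) i' w)).
Qed.

Lemma id_lemma i : Dgerm (base (sN n i)) (base i) (Phi n i) (fun x => x).
Proof.
  apply Dgerm_of_I. destruct (Hid i) as [k [u [u' H]]]. exists k, u, u'. exact H.
Qed.

Lemma mod_lemma k i : Dgerm (base (sN (n + k) i)) (base (sN k i)) (Phi (n + k) i) (Phi k i).
Proof.
  destruct (Dgerm_wit _ _ _ _ _ (id_lemma i)) as [d [h1 [h2 Hx]]].
  eapply Dgerm_trans.
  - apply Dgerm_sym. apply (comp_lemma n k i (dv d) (tarr h1)).
  - eapply Dgerm_trans; [| apply (iter_prohom k i (dv d) (tarr h2))].
    eapply Dgerm_ext; [intro x; reflexivity | | apply Dgerm_refl].
    intro x. simpl. apply (Hx (Phi k (dv d) x)).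
Qed.

Lemma Phi_mod t : forall i, Dgerm (base (sN t i)) (base (sN (t mod n) i)) (Phi t i) (Phi (t mod n) i).
Proof.
  induction t as [t IH] using (well_founded_induction Nat.lt_wf_0). intro i.
  destruct (Nat.lt_ge_cases t n) as [Hlt|Hge].
  - rewrite (Nat.mod_small t n Hlt). apply Dgerm_refl.
  - assert (E : t = n + (t - n)) by lia. remember (t - n) as t' eqn:Ht'. rewrite E.
    assert (E2 : (n + t') mod n = t' mod n).
    { rewrite Nat.add_comm. rewrite <- (Nat.mul_1_l n) at 1. rewrite Nat.Div0.mod_add; lia. }
    rewrite E2. eapply Dgerm_trans; [apply mod_lemma|]. apply IH. lia.
Qed.


Lemma n_nz : n <> 0.
Proof. lia. Qed.

Record Eob := { ea : Dob; eb : Dob; epe : forall k, dleD (base (sN (k mod n) (dv ea))) eb }.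

Definition delta (p : Eob) (x : G (dv (eb p))) (j : nat) : G (dv (ea p)) :=
  Phi (j mod n) (dv (ea p)) (tr (epe p j) x).

Lemma delta_mod p x t t' : t mod n = t' mod n -> delta p x t = delta p x t'.
Proof.
  intro E. unfold delta. generalize (epe p t) (epe p t'). rewrite E. intros q q'.
  rewrite (proof_irrelevance _ q q'). reflexivity.
Qed.

Definition deltaH (p : Eob) : GHom (G (dv (eb p))) (FunG (G (dv (ea p)))).
Proof.
  refine {| hfun := fun x => (delta p x : FunG (G (dv (ea p)))) |}.
  intros. apply functional_extensionality. intro j. unfold delta. simpl. rewrite !hmul. reflexivity.
Defined.

Definition Gens (p : Eob) (y : FunG (G (dv (ea p)))) : Prop :=
  exists m x, forall j, y j = delta p x (j + m).

Definition Q (p : Eob) : Grp := SubGen (FunG (G (dv (ea p)))) (Gens p).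

Definition dleE (p q : Eob) : Prop :=
  dleD (ea p) (ea q) /\ dleD (eb p) (eb q) /\
  forall (h1 : dleD (ea p) (ea q)) (h2 : dleD (eb p) (eb q)) x j,
    tr h1 (delta q x j) = delta p (tr h2 x) j.

Lemma dleE_refl p : dleE p p.
Proof.
  split; [apply dleD_refl|]. split; [apply dleD_refl|]. intros. rewrite !tr_refl. reflexivity.
Qed.

Lemma dleE_trans p q r : dleE p q -> dleE q r -> dleE p r.
Proof.
  intros [a1 [b1 E1]] [a2 [b2 E2]].
  split; [eapply dleD_trans; eauto|]. split; [eapply dleD_trans; eauto|].
  intros h1 h2 x j. rewrite (tr_comp a1 a2 h1), (E2 a2 b2), (E1 a1 b1). rewrite (tr_comp b1 b2 h2). reflexivity.
Qed.

Lemma E_exists (a : Dob) (P : Dob -> Prop) : ev P ->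
  exists b, (forall k, dleD (base (sN (k mod n) (dv a))) b) /\ P b.
Proof.
  intro HP.
  assert (H0 : ev (fun d => forall k, k < n -> dleD (base (sN k (dv a))) d)).
  { apply ev_all_lt. intros. apply ev_le. }
  destruct (ev_ex _ a (ev_and _ _ H0 HP)) as [b [_ [Hb HPb]]].
  exists b. split; auto. intro k. apply Hb. apply Nat.mod_upper_bound. apply n_nz.
Qed.

Lemma E_cond_ev (p : Eob) a' (h : dleD (ea p) a') :
  ev (fun d => forall k, k < n -> forall (q : dleD (base (sN (k mod n) (dv a'))) d) (h' : dleD (eb p) d) x,
     tr h (Phi (k mod n) (dv a') (tr q x)) = Phi (k mod n) (dv (ea p)) (tr (epe p k) (tr h' x))).
Proof.
  apply ev_all_lt. intros k _.
  assert (D : Dgerm (base (sN (k mod n) (dv a'))) (eb p)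
     (fun x => tr h (Phi (k mod n) (dv a') x)) (fun x => Phi (k mod n) (dv (ea p)) (tr (epe p k) x))).
  { eapply Dgerm_trans. apply (iter_prohom (k mod n) (dv (ea p)) (dv a') (tarr h)).
    apply Dgerm_sym. apply Dgerm_pre. apply Dgerm_refl. }
  exact D.
Qed.

Lemma E_above (p1 p2 : Eob) a' (h1 : dleD (ea p1) a') (h2 : dleD (ea p2) a') (P : Dob -> Prop) :
  ev P -> exists b' (pe' : forall k, dleD (base (sN (k mod n) (dv a'))) b'),
    dleE p1 (Build_Eob a' b' pe') /\ dleE p2 (Build_Eob a' b' pe') /\ P b'.
Proof.
  intro HP.
  pose proof (ev_and _ _ (ev_and _ _ (E_cond_ev p1 a' h1) (E_cond_ev p2 a' h2))
               (ev_and _ _ (ev_and _ _ (ev_le (eb p1)) (ev_le (eb p2))) HP)) as Hall.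
  destruct (E_exists a' _ Hall) as [b' [pe' [[C1 C2] [[L1 L2] HPb]]]].
  exists b', pe'.
  assert (Hgen : forall (p : Eob) (h : dleD (ea p) a'),
     (forall k, k < n -> forall (q : dleD (base (sN (k mod n) (dv a'))) b') (h' : dleD (eb p) b') x,
       tr h (Phi (k mod n) (dv a') (tr q x)) = Phi (k mod n) (dv (ea p)) (tr (epe p k) (tr h' x))) ->
     dleD (eb p) b' -> dleE p (Build_Eob a' b' pe')).
  { intros p h C L. split; [exact h|]. split; [exact L|]. intros hh1 hh2 x j.
    rewrite (delta_mod _ x j (j mod n)) by (rewrite Nat.Div0.mod_mod; auto using n_nz).
    rewrite (delta_mod p _ j (j mod n)) by (rewrite Nat.Div0.mod_mod; auto using n_nz).
    unfold delta at 1. simpl. rewrite (tr_pi hh1 h). apply C.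
    apply Nat.mod_upper_bound. apply n_nz. }
  split; [|split]; auto.
  - apply (Hgen p1 h1); auto.
  - apply (Hgen p2 h2); auto.
Qed.

Definition itransQ (p q : Eob) (h : dleE p q) : GHom (Q q) (Q p).
Proof.
  refine (SubMap _ _ (FunMap _ _ (tr (proj1 h))) (Gens q) (Gens p) _).
  intros y [m [x Hy]]. apply gen_b. exists m, (tr (proj1 (proj2 h)) x). intro j. simpl.
  rewrite Hy. apply (proj2 (proj2 h)).
Defined.

Definition Ed : DirectedSet.
Proof.
  refine {| dcar := Eob; dle := dleE; dle_refl := dleE_refl; dle_trans := dleE_trans |}.
  - destruct (filt_nonempty I) as [i]. destruct (E_exists (base i) (fun _ => True) (ex_intro _ (base i) (fun _ _ => Logic.I))) as [b [pe _]].
    exact (inhabits (Build_Eob (base i) b pe)).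
  - intros p1 p2. destruct (dirD (ea p1) (ea p2)) as [a' [h1 h2]].
    destruct (E_above p1 p2 a' h1 h2 (fun _ => True) (ex_intro _ a' (fun _ _ => Logic.I))) as [b' [pe' [H1 [H2 _]]]].
    exists (Build_Eob a' b' pe'). split; auto.
Defined.

Definition Esys : InvSys Ed.
Proof.
  refine (@Build_InvSys Ed Q itransQ _ _).
  - intros i h x. apply sub_eq. simpl. apply functional_extensionality. intro j. apply tr_refl.
  - intros i k l h1 h2 h3 x. apply sub_eq. simpl. apply functional_extensionality. intro j. apply tr_comp.
Defined.

Definition shiftQ (p : Eob) : GHom (Q p) (Q p).
Proof.
  refine (SubMap _ _ (shiftk _ 1) (Gens p) (Gens p) _).
  intros y [m [x Hy]]. apply gen_b. exists (S m), x. intro j. simpl. rewrite Hy. f_equal. lia.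
Defined.

Definition invQ (p : Eob) : GHom (Q p) (Q p).
Proof.
  refine (SubMap _ _ (shiftk _ (n - 1)) (Gens p) (Gens p) _).
  intros y [m [x Hy]]. apply gen_b. exists (n - 1 + m), x. intro j. simpl. rewrite Hy. f_equal. lia.
Defined.

Lemma periodic (p : Eob) (y : Q p) j : proj1_sig y (j + n) = proj1_sig y j.
Proof.
  destruct y as [y Hy]. simpl.
  refine (gen_ind_eq _ _ (Gens p) (evalH _ (j + n)) (evalH _ j) _ y Hy).
  intros y' [m [x Hx]]. simpl. rewrite (Hx (j + n)), (Hx j). apply delta_mod.
  replace (j + n + m) with ((j + m) + 1 * n) by lia. apply Nat.Div0.mod_add.
Qed.

Lemma fiter_val (p : Eob) k (y : Q p) j : proj1_sig (fiter k (shiftQ p) y) j = proj1_sig y (j + k).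
Proof.
  revert j. induction k; intro j.
  - simpl. f_equal. lia.
  - simpl. rewrite IHk. f_equal. lia.
Qed.

Lemma alpha_gens p x : Gens p (delta p x).
Proof. exists 0, x. intro j. rewrite Nat.add_0_r. reflexivity. Qed.

Definition alphaQ (p : Eob) : GHom (G (dv (eb p))) (Q p).
Proof.
  refine {| hfun := fun x => (exist _ (delta p x : FunG (G (dv (ea p)))) (gen_b _ _ (alpha_gens p x)) : Q p) |}.
  intros x y. apply sub_eq. simpl. exact (hmul (deltaH p) x y).
Defined.

Definition alpha : PreHom G (pro_of_sys Esys) :=
  @Build_PreHom G (pro_of_sys Esys) (fun p : Eob => dv (eb p)) alphaQ.

Definition eQs (i : I) := constructive_indefinite_description _
  (E_exists (base i) (fun _ => True) (ex_intro _ (base i) (fun _ _ => Logic.I))).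

Definition eQ (i : I) : Eob := Build_Eob (base i) (proj1_sig (eQs i)) (proj1 (proj2_sig (eQs i))).

Definition betaQ (i : I) : GHom (Q (eQ i)) (G i).
Proof. refine {| hfun := fun y : Q (eQ i) => proj1_sig y 0 |}. reflexivity. Defined.

Definition beta : PreHom (pro_of_sys Esys) G :=
  @Build_PreHom (pro_of_sys Esys) G eQ betaQ.

Lemma tr_eq_pmap d d' t (Ht : In (mkE (dv d) (dtag d) t) (dL d')) (h : dleD d d') x : tr h x = pmap t x.
Proof. unfold tr. rewrite (tarr_uniq h t Ht). reflexivity. Qed.

Lemma alpha_prohom : is_prohom alpha.
Proof.
  intros p q h. exists (dv (eb q)), (idm _), (tarr (proj1 (proj2 h))). intro x.
  apply sub_eq. simpl. apply functional_extensionality. intro j. rewrite pmap_id.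
  apply (proj2 (proj2 h)).
Qed.

Lemma beta_prohom : is_prohom beta.
Proof.
  intros i i' w.
  destruct (core (base i') (base i) i' (idm i') w) as [e [c [[t1 [Ht1 E1]] [[t2 [Ht2 E2]] [H1 H2]]]]].
  destruct (E_above (eQ i') (eQ i) e H1 H2 (fun _ => True) (ex_intro _ e (fun _ _ => Logic.I)))
    as [b' [pe' [U1 [U2 _]]]].
  exists (Build_Eob e b' pe'), U1, U2. intro y. simpl.
  rewrite (tr_eq_pmap _ _ t1 Ht1), (tr_eq_pmap _ _ t2 Ht2). subst t1 t2.
  rewrite !pmap_comp, pmap_id. reflexivity.
Qed.

Lemma D_lemma : pro_eq (pro_comp beta alpha) (pro_id G).
Proof.
  intro i.
  assert (Dg : Dgerm (eb (eQ i)) (base i) (fun x => delta (eQ i) x 0) (fun x => x)).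
  { eapply Dgerm_trans.
    - apply (Dgerm_pre _ _ (epe (eQ i) 0)). apply Dgerm_refl.
    - generalize (Phi_mod 0 i). rewrite Nat.Div0.mod_0_l. intro H. exact H. }
  destruct (I_of_Dgerm _ _ _ _ _ Dg) as [k [u1 [u2 H]]]. exists k, u1, u2. exact H.
Qed.

Lemma Dgerm_jm (p : Eob) a' (ha : dleD (ea p) a') (hbb : dleD (base (dv (eb p))) a') j m :
  Dgerm (base (sN (m mod n) (dv a'))) (base (sN ((j + m) mod n) (dv a')))
    (fun x => delta p (tr hbb (Phi (m mod n) (dv a') x)) j)
    (fun x => tr ha (Phi ((j + m) mod n) (dv a') x)).
Proof.
  assert (A1 := comp_lemma (j mod n) (m mod n) (dv (ea p)) (dv a') (cmp (tarr hbb) (tarr (epe p j)))).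
  assert (A2 := Phi_mod (j mod n + m mod n) (dv (ea p))).
  rewrite <- Nat.Div0.add_mod in A2.
  assert (A3 := iter_prohom ((j + m) mod n) (dv (ea p)) (dv a') (tarr ha)).
  eapply Dgerm_trans; [| eapply Dgerm_trans; [exact A2 | apply Dgerm_sym; exact A3]].
  eapply Dgerm_ext; [| intro x; reflexivity | exact A1].
  intro x. unfold delta, tr. rewrite pmap_comp. reflexivity.
Qed.

Lemma E_lemma : pro_eq (pro_comp alpha beta) (pro_id (pro_of_sys Esys)).
Proof.
  intro p. set (bb := eQ (dv (eb p))).
  destruct (dirD (ea p) (ea bb)) as [a' [ha hbb]].
  set (P := fun b' => forall j, j < n -> forall m, m < n ->
     forall (q1 : dleD (base (sN (m mod n) (dv a'))) b') (q2 : dleD (base (sN ((j + m) mod n) (dv a'))) b') x,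
       delta p (tr hbb (Phi (m mod n) (dv a') (tr q1 x))) j = tr ha (Phi ((j + m) mod n) (dv a') (tr q2 x))).
  assert (evP : ev P).
  { apply ev_all_lt. intros j _. apply ev_all_lt. intros m _. exact (Dgerm_jm p a' ha hbb j m). }
  destruct (E_above bb p a' hbb ha P evP) as [b' [pe' [U1 [U2 HP]]]].
  exists (Build_Eob a' b' pe'), U1, U2. intro y. apply sub_eq. simpl.
  apply functional_extensionality. intro j. destruct y as [yv Hy]. simpl.
  set (q := Build_Eob a' b' pe') in *.
  refine (gen_ind_eq _ _ (Gens q)
     (ghom_comp (evalH _ j) (ghom_comp (deltaH p) (ghom_comp (tr (proj1 U1)) (evalH _ 0))))
     (ghom_comp (tr (proj1 U2)) (evalH _ j)) _ yv Hy).
  intros y' [mm [x Hx]]. simpl. rewrite (Hx 0), (Hx j). simpl.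
  rewrite (delta_mod p _ j (j mod n)) by (rewrite Nat.Div0.mod_mod; auto).
  rewrite (delta_mod q x mm (mm mod n)) by (rewrite Nat.Div0.mod_mod; auto).
  rewrite (delta_mod q x (j + mm) (j mod n + mm mod n)) by (apply Nat.Div0.add_mod).
  rewrite (tr_pi (proj1 U1) hbb), (tr_pi (proj1 U2) ha).
  exact (HP (j mod n) (Nat.mod_upper_bound _ _ n_nz) (mm mod n) (Nat.mod_upper_bound _ _ n_nz)
           (pe' (mm mod n)) (pe' (j mod n + mm mod n)) x).
Qed.

Lemma Dgerm_F (p : Eob) j :
  Dgerm (base (src phi (dv (eb p)))) (eb p) (fun x => delta p (phi (dv (eb p)) x) j) (fun x => delta p x (S j)).
Proof.
  assert (A1 := comp_lemma (j mod n) 1 (dv (ea p)) (dv (eb p)) (tarr (epe p j))).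
  assert (A2 := Phi_mod (j mod n + 1) (dv (ea p))).
  rewrite Nat.Div0.add_mod_idemp_l in A2. replace (j + 1) with (S j) in A2 by lia.
  assert (A3 := Dgerm_pre _ _ (epe p (S j)) _ _ _ _ (Dgerm_refl (base (sN (S j mod n) (dv (ea p)))) _ (fun x => Phi (S j mod n) (dv (ea p)) x))).
  eapply Dgerm_trans; [| eapply Dgerm_trans; [exact A2 | apply Dgerm_sym; exact A3]].
  exact A1.
Qed.

Lemma F_lemma : pro_eq (pro_comp alpha phi) (pro_comp (@level_hom Ed Esys shiftQ) alpha).
Proof.
  intro p.
  assert (H := ev_and _ _ (ev_all_lt _ n (fun j _ => Dgerm_F p j))
                 (ev_and _ _ (ev_le (base (src phi (dv (eb p))))) (ev_le (eb p)))).
  destruct (ev_ex _ (eb p) H) as [d [_ [Hd [h1 h2]]]].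
  exists (dv d), (tarr h1), (tarr h2). intro x. apply sub_eq. simpl.
  apply functional_extensionality. intro j.
  rewrite (delta_mod p _ j (j mod n)) by (rewrite Nat.Div0.mod_mod; auto).
  rewrite (delta_mod p _ (j + 1) (S (j mod n))) by (replace (S (j mod n)) with (j mod n + 1) by lia; symmetry; apply Nat.Div0.add_mod_idemp_l).
  exact (Hd (j mod n) (Nat.mod_upper_bound _ _ n_nz) h1 h2 x).
Qed.

Lemma main_sec :
  exists (J : DirectedSet) (S : InvSys J) (phis : forall j : J, GHom (S j) (S j)),
    (forall j : J, (exists g : GHom (S j) (S j),
                      (forall x, g (phis j x) = x) /\ (forall x, phis j (g x) = x))
                   /\ (forall x, fiter n (phis j) x = x)) /\
    (forall (i k : J) (h : @dle J i k) x, phis i (itrans h x) = itrans h (phis k x)) /\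
    exists alpha : PreHom G (pro_of_sys S),
      pro_iso alpha /\
      pro_eq (pro_comp alpha phi) (pro_comp (level_hom phis) alpha).
Proof.
  exists Ed, Esys, shiftQ. split; [|split].
  - intro p. split.
    + exists (invQ p). split; intro y; apply sub_eq; apply functional_extensionality; intro j; simpl.
      * replace (j + (n - 1) + 1) with (j + n) by lia. apply periodic.
      * replace (j + 1 + (n - 1)) with (j + n) by lia. apply periodic.
    + intro y. apply sub_eq. apply functional_extensionality. intro j. rewrite fiter_val. apply periodic.
  - intros i k h x. apply sub_eq. reflexivity.
  - exists alpha. split; [|exact F_lemma].
    split; [exact alpha_prohom|]. exists beta. split; [exact beta_prohom|]. split; [exact D_lemma|exact E_lemma].
Qed.
End DSec.

Theorem mainTheorem7 (G : ProGrp) (phi : PreHom G G) (n : nat) :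
  (1 <= n)%nat ->
  pro_iso phi ->
  pro_eq (pro_iter n phi) (pro_id G) ->
  exists (J : DirectedSet) (S : InvSys J) (phis : forall j : J, GHom (S j) (S j)),
    (forall j : J, (exists g : GHom (S j) (S j),
                      (forall x, g (phis j x) = x) /\ (forall x, phis j (g x) = x))
                   /\ (forall x, fiter n (phis j) x = x)) /\
    (forall (i k : J) (h : @dle J i k) x, phis i (itrans h x) = itrans h (phis k x)) /\
    exists alpha : PreHom G (pro_of_sys S),
      pro_iso alpha /\
      pro_eq (pro_comp alpha phi) (pro_comp (level_hom phis) alpha).
Proof.
  intros Hn [Hpro _] Hid. exact (main_sec G phi n Hn Hpro Hid).
Qed.
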